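(* Let $V$ be a real vector space, $K$ a convex subset of $V$ spanning $V$, and $\rho$ a metric on $K$. Let $V^0=\{t(\mu-\nu): t\in\mathbb{R},\ \mu,\nu\in K\}$, a vector subspace of $V$. Then there is a norm $M$ on $V^0$ such that $\rho(\mu,\nu)=M(\mu-\nu)$ for all $\mu,\nu\in K$ if and only if $\rho$ is convex, midpoint balanced, and midpoint concave. Such a norm $M$ is unique.
   Context: For a metric $\rho$ on a convex set $K$: $\rho$ is convex if $\rho(\mu,t\nu_1+(1-t)\nu_2)\le t\rho(\mu,\nu_1)+(1-t)\rho(\mu,\nu_2)$ for all $\mu,\nu_1,\nu_2\in K$, $t\in[0,1]$; $\rho$ is midpoint balanced if whenever $\mu,\nu,\mu',\nu'\in K$ satisfy $(\mu+\nu')/2=(\mu'+\nu)/2$ then $\rho(\mu,\nu)=\rho(\mu',\nu')$; $\rho$ is midpoint concave if $\rho((\mu+\mu')/2,(\nu+\nu')/2)\le\frac12(\rho(\mu,\nu)+\rho(\mu',\nu'))$ for all $\mu,\nu,\mu',\nu'\in K$. *)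

(* Defs.v *)
From mathcomp Require Import all_boot all_order all_algebra.
From mathcomp Require Import reals.
Set Implicit Arguments. Unset Strict Implicit. Unset Printing Implicit Defensive.
Import Order.TTheory GRing.Theory Num.Theory.
Local Open Scope ring_scope.

Section Defs.
Variables (R : realType) (V : lmodType R).

Definition convex_set (K : V -> Prop) : Prop :=
  forall x y t, K x -> K y -> 0 <= t -> t <= 1 -> K (t *: x + (1 - t) *: y).

Definition spans (K : V -> Prop) : Prop :=
  forall v : V, exists (n : nat) (c : 'I_n -> R) (x : 'I_n -> V),
    (forall i, K (x i)) /\ v = \sum_(i < n) c i *: x i.

Definition is_metric_on (K : V -> Prop) (rho : V -> V -> R) : Prop :=
  [/\ forall x y, K x -> K y -> 0 <= rho x y,
      forall x y, K x -> K y -> rho x y = 0 <-> x = y,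
      forall x y, K x -> K y -> rho x y = rho y x &
      forall x y z, K x -> K y -> K z -> rho x z <= rho x y + rho y z].

Definition V0 (K : V -> Prop) (v : V) : Prop :=
  exists t mu nu, K mu /\ K nu /\ v = t *: (mu - nu).

(* M is a norm on the subspace S (values of M outside S are irrelevant) *)
Definition is_norm_on (S : V -> Prop) (M : V -> R) : Prop :=
  [/\ forall x, S x -> 0 <= M x,
      forall x, S x -> M x = 0 -> x = 0,
      forall a x, S x -> M (a *: x) = `|a| * M x &
      forall x y, S x -> S y -> M (x + y) <= M x + M y].

Definition rho_convex (K : V -> Prop) (rho : V -> V -> R) : Prop :=
  forall mu nu1 nu2 t, K mu -> K nu1 -> K nu2 -> 0 <= t -> t <= 1 ->
    rho mu (t *: nu1 + (1 - t) *: nu2) <= t * rho mu nu1 + (1 - t) * rho mu nu2.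

Definition midpoint_balanced (K : V -> Prop) (rho : V -> V -> R) : Prop :=
  forall mu nu mu' nu', K mu -> K nu -> K mu' -> K nu' ->
    2^-1 *: (mu + nu') = 2^-1 *: (mu' + nu) -> rho mu nu = rho mu' nu'.

Definition midpoint_concave (K : V -> Prop) (rho : V -> V -> R) : Prop :=
  forall mu nu mu' nu', K mu -> K nu -> K mu' -> K nu' ->
    rho (2^-1 *: (mu + mu')) (2^-1 *: (nu + nu'))
      <= 2^-1 * (rho mu nu + rho mu' nu').

End Defs.

(* Main.v *)
Require Import Defs.
From mathcomp Require Import all_boot all_order all_algebra.
From mathcomp Require Import reals.
From mathcomp Require Import ring lra.
From Stdlib Require Import ClassicalEpsilon.
Import Order.TTheory GRing.Theory Num.Theory.
Local Open Scope ring_scope.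

Section Aux.
Variables (R : realType) (V : lmodType R).

Lemma id2 (mu nu : V) (c : R) : mu - (c *: nu + (1 - c) *: mu) = c *: (mu - nu).
Proof.
by rewrite scalerBl scale1r scalerBr opprD opprB addrA addrC addrA subrK.
Qed.

Lemma scale2K (x : V) : 2 *: (2^-1 *: x) = x.
Proof. by rewrite scalerA mulfV ?scale1r // pnatr_eq0. Qed.

Lemma half_mid (mu mu' : V) : 2^-1 *: (mu + mu') = 2^-1 *: mu + (1 - 2^-1) *: mu'.
Proof. by rewrite (_ : 1 - 2^-1 = 2^-1 :> R) ?scalerDr //; lra. Qed.

Lemma V0_diff (K : V -> Prop) mu nu : K mu -> K nu -> V0 K (mu - nu).
Proof. by move=> Hm Hn; exists 1, mu, nu; rewrite scale1r. Qed.

End Aux.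
Arguments id2 {R V}. Arguments scale2K {R V}. Arguments half_mid {R V}.
Arguments V0_diff {R V K mu nu}.

Section Back.
Variables (R : realType) (V : lmodType R) (K : V -> Prop) (rho : V -> V -> R).
Hypotheses (cK : convex_set K) (mK : is_metric_on K rho)
  (rc : rho_convex K rho) (mb : midpoint_balanced K rho)
  (mc : midpoint_concave K rho).

Lemma rho_ge0 {x y} : K x -> K y -> 0 <= rho x y.
Proof. by case: mK => h _ _ _; apply: h. Qed.
Lemma rho_xx {x} : K x -> rho x x = 0.
Proof. by case: mK => _ h _ _ Kx; apply: (proj2 (h x x Kx Kx)). Qed.
Lemma rho_eq0 {x y} : K x -> K y -> rho x y = 0 -> x = y.
Proof. by case: mK => _ h _ _ Kx Ky; apply: (proj1 (h x y Kx Ky)). Qed.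
Lemma rho_sym {x y} : K x -> K y -> rho x y = rho y x.
Proof. by case: mK => _ _ h _; apply: h. Qed.
Lemma rho_tri {x y z} : K x -> K y -> K z -> rho x z <= rho x y + rho y z.
Proof. by case: mK => _ _ _ h; apply: h. Qed.

Lemma bal_diff {mu nu mu' nu'} : K mu -> K nu -> K mu' -> K nu' ->
  mu - nu = mu' - nu' -> rho mu nu = rho mu' nu'.
Proof.
move=> K1 K2 K3 K4 H; apply: mb => //; congr (_ *: _).
by rewrite -{1}(subrK nu mu) H addrAC subrK.
Qed.

Lemma scale_half {mu nu c} : K mu -> K nu -> 0 <= c -> c <= 1 ->
  rho mu (c *: nu + (1 - c) *: mu) = c * rho mu nu.
Proof.
move=> Km Kn c0 c1.
set w := c *: nu + (1 - c) *: mu.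
have Kw : K w by apply: cK.
have h1 := rc mu nu mu c Km Kn Km c0 c1.
have h2 : rho nu w <= (1 - c) * rho nu mu + (1 - (1 - c)) * rho nu nu.
  have -> : w = (1 - c) *: mu + (1 - (1 - c)) *: nu.
    by rewrite /w addrC (_ : 1 - (1 - c) = c) //; ring.
  by apply: rc => //; lra.
rewrite !rho_xx // in h1 h2.
have h3 := rho_tri Km Kw Kn.
  rewrite -/w in h1.
rewrite (rho_sym Kw Kn) (rho_sym Kn Km) in h3 h2 *.
have := rho_ge0 Km Kn; lra.
Qed.

Lemma hom {mu nu mu' nu' c} : K mu -> K nu -> K mu' -> K nu' -> 0 <= c -> c <= 1 ->
  mu' - nu' = c *: (mu - nu) -> rho mu' nu' = c * rho mu nu.
Proof.
move=> K1 K2 K3 K4 c0 c1 H.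
rewrite -(scale_half K1 K2 c0 c1); apply: bal_diff => //.
  by apply: cK.
by rewrite id2.
Qed.

Lemma wd0 {t s mu nu mu' nu'} : K mu -> K nu -> K mu' -> K nu' -> 0 <= s -> s <= t ->
  t *: (mu - nu) = s *: (mu' - nu') -> t * rho mu nu = s * rho mu' nu'.
Proof.
move=> K1 K2 K3 K4 s0 st H.
have [t0|tpos] := eqVneq t 0.
  have s00 : s = 0 by apply/le_anti; rewrite s0 andbT -t0.
  by rewrite t0 s00 !mul0r.
have tp : 0 < t by rewrite lt_neqAle eq_sym tpos (le_trans s0 st).
have E : mu - nu = (s / t) *: (mu' - nu').
  transitivity (t^-1 *: (t *: (mu - nu))); first by rewrite scalerA mulVf ?scale1r.
  by rewrite H scalerA mulrC.
have c0 : 0 <= s / t by rewrite divr_ge0 // ltW.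
have c1 : s / t <= 1 by rewrite ler_pdivrMr // mul1r.
by rewrite (hom K3 K4 K1 K2 c0 c1 E) mulrA mulrCA mulfV // mulr1.
Qed.

Lemma wd1 {t s mu nu mu' nu'} : K mu -> K nu -> K mu' -> K nu' -> 0 <= s -> 0 <= t ->
  t *: (mu - nu) = s *: (mu' - nu') -> t * rho mu nu = s * rho mu' nu'.
Proof.
move=> K1 K2 K3 K4 s0 t0 H.
have [st|ts] := leP s t; first exact: wd0.
by symmetry; apply: wd0 => //; apply: ltW.
Qed.

Lemma norm_rep t {mu nu} : K mu -> K nu -> exists t' a b,
  [/\ K a, K b, 0 <= t', t *: (mu - nu) = t' *: (a - b) & `|t| * rho mu nu = t' * rho a b].
Proof.
move=> Km Kn; have [t0|t0] := lerP 0 t.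
  by exists t, mu, nu; rewrite ger0_norm.
exists (- t), nu, mu; split => //.
- by rewrite oppr_ge0 ltW.
- by rewrite scaleNr -scalerN opprB.
- by rewrite ltr0_norm // rho_sym.
Qed.

Lemma wd {t s mu nu mu' nu'} : K mu -> K nu -> K mu' -> K nu' ->
  t *: (mu - nu) = s *: (mu' - nu') -> `|t| * rho mu nu = `|s| * rho mu' nu'.
Proof.
move=> K1 K2 K3 K4 H.
have [t' [a [b [Ka Kb t0 E1 E2]]]] := norm_rep t K1 K2.
have [s' [a' [b' [Ka' Kb' s0 E3 E4]]]] := norm_rep s K3 K4.
rewrite E2 E4; apply: wd1 => //.
by rewrite -E1 -E3.
Qed.

Definition PM (v : V) (p : R * V * V) : Prop :=
  K p.1.2 /\ K p.2 /\ v = p.1.1 *: (p.1.2 - p.2).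

Definition Mdef (v : V) : R :=
  let p := epsilon (inhabits (0 : R, 0 : V, 0 : V)) (PM v) in
  `|p.1.1| * rho p.1.2 p.2.

Lemma Mrep {v t mu nu} : K mu -> K nu -> v = t *: (mu - nu) -> Mdef v = `|t| * rho mu nu.
Proof.
move=> Km Kn Hv.
have ex : exists p, PM v p by exists (t, mu, nu).
have [Ka [Kb E]] := epsilon_spec (inhabits (0 : R, 0 : V, 0 : V)) (PM v) ex.
rewrite /Mdef; apply: wd => //.
by rewrite -E -Hv.
Qed.

Lemma Mnorm : is_norm_on (V0 K) Mdef.
Proof.
split.
- move=> x [t [mu [nu [Km [Kn ->]]]]].
  by rewrite (Mrep Km Kn erefl) mulr_ge0 // rho_ge0.
- move=> x [t [mu [nu [Km [Kn ->]]]]].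
  rewrite (Mrep Km Kn erefl) => /eqP; rewrite mulf_eq0 => /orP [|/eqP].
    by rewrite normr_eq0 => /eqP ->; rewrite scale0r.
  by move=> /(rho_eq0 Km Kn) ->; rewrite subrr scaler0.
- move=> a x [t [mu [nu [Km [Kn ->]]]]].
  rewrite (Mrep Km Kn erefl) (Mrep Km Kn (scalerA a t _)).
  by rewrite normrM mulrA.
- move=> x y [t1 [mu [nu [Km [Kn ->]]]]] [t2 [mu' [nu' [Km' [Kn' ->]]]]].
  rewrite (Mrep Km Kn erefl) (Mrep Km' Kn' erefl).
  have [t [a [b [Ka Kb t0 E1 ->]]]] := norm_rep t1 Km Kn.
  have [s [a' [b' [Ka' Kb' s0 E3 ->]]]] := norm_rep t2 Km' Kn'.
  rewrite E1 E3.
  set c := t + s + 1.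
  have cp : 0 < c by rewrite /c; lra.
  have cn : c != 0 by rewrite gt_eqF.
  set al := t / c; set be := s / c.
  have al0 : 0 <= al by rewrite divr_ge0 // ltW.
  have be0 : 0 <= be by rewrite divr_ge0 // ltW.
  have al1 : al <= 1 by rewrite ler_pdivrMr // mul1r /c; lra.
  have be1 : be <= 1 by rewrite ler_pdivrMr // mul1r /c; lra.
  have eal : c * al = t by rewrite /al mulrCA mulfV // mulr1.
  have ebe : c * be = s by rewrite /be mulrCA mulfV // mulr1.
  set w1 := al *: b + (1 - al) *: a.
  set w2 := be *: b' + (1 - be) *: a'.
  have Kw1 : K w1 by apply: cK.
  have Kw2 : K w2 by apply: cK.
  have r1 : rho a w1 = al * rho a b by apply: scale_half.
  have r2 : rho a' w2 = be * rho a' b' by apply: scale_half.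
  have Km1 : K (2^-1 *: (a + a')) by rewrite half_mid; apply: cK => //; lra.
  have Km2 : K (2^-1 *: (w1 + w2)) by rewrite half_mid; apply: cK => //; lra.
  have hc := mc a w1 a' w2 Ka Kw1 Ka' Kw2.
  have E : t *: (a - b) + s *: (a' - b') =
           (2 * c) *: (2^-1 *: (a + a') - 2^-1 *: (w1 + w2)).
    rewrite -scalerBr scalerA (mulrC 2) -mulrA mulfV ?pnatr_eq0 // mulr1.
    rewrite opprD addrACA /w1 /w2 !id2 [RHS]scalerDr !scalerA eal ebe //.
  rewrite (Mrep Km1 Km2 E) ger0_norm; last by rewrite mulr_ge0 // ltW.
  rewrite r1 r2 in hc.
  have g1 := rho_ge0 Ka Kb; have g2 := rho_ge0 Ka' Kb'.
  rewrite -eal -ebe.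
  have := ler_wpM2l (ltW cp) hc.
  set r := rho _ _; set p := rho a b; set q := rho a' b'.
  move=> h.
  have -> : 2 * c * r = 2 * (c * r) by rewrite mulrA.
  have -> : c * al * p + c * be * q = 2 * (c * (2^-1 * (al * p + be * q))).
    by rewrite (mulrCA 2) (mulrA 2) mulfV ?pnatr_eq0 // mul1r mulrDr !mulrA.
  by rewrite ler_wpM2l.
Qed.

End Back.
Arguments Mdef {R V}. Arguments Mrep {R V K rho}.

Theorem theorem9p7 (R : realType) (V : lmodType R) (K : V -> Prop)
    (rho : V -> V -> R) :
  convex_set K -> spans K -> is_metric_on K rho ->
  ((exists M : V -> R, is_norm_on (V0 K) M /\
      forall mu nu, K mu -> K nu -> rho mu nu = M (mu - nu))
    <-> [/\ rho_convex K rho, midpoint_balanced K rho & midpoint_concave K rho])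
  /\
  (forall M1 M2 : V -> R,
      is_norm_on (V0 K) M1 -> (forall mu nu, K mu -> K nu -> rho mu nu = M1 (mu - nu)) ->
      is_norm_on (V0 K) M2 -> (forall mu nu, K mu -> K nu -> rho mu nu = M2 (mu - nu)) ->
      forall x, V0 K x -> M1 x = M2 x).
Proof.
move=> cK _ mK; split; last first.
  move=> M1 M2 [_ _ s1 _] h1 [_ _ s2 _] h2 x [t [mu [nu [Km [Kn ->]]]]].
  rewrite s1; last exact: V0_diff.
  rewrite s2; last exact: V0_diff.
  by rewrite -h1 // -h2.
split.
  move=> [M [[g0 z0 sc tr] hM]]; split.
  - move=> mu nu1 nu2 t Km K1 K2 t0 t1.
    rewrite !hM //; last by apply: cK.
    have -> : mu - (t *: nu1 + (1 - t) *: nu2) = t *: (mu - nu1) + (1 - t) *: (mu - nu2).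
      rewrite {1}(_ : mu = t *: mu + (1 - t) *: mu); last first.
        by rewrite -scalerDl addrC subrK scale1r.
      by rewrite !scalerBr opprD addrACA.
    have v1 : V0 K (t *: (mu - nu1)) by exists t, mu, nu1.
    have v2 : V0 K ((1 - t) *: (mu - nu2)) by exists (1 - t), mu, nu2.
    apply: le_trans (tr _ _ v1 v2) _.
    rewrite !sc; try exact: V0_diff.
    rewrite (ger0_norm t0) ger0_norm; last lra.
    have := g0 _ (V0_diff Km K1); have := g0 _ (V0_diff Km K2); lra.
  - move=> mu nu mu' nu' K1 K2 K3 K4 H.
    have H2 : mu + nu' = mu' + nu by rewrite -(scale2K (mu + nu')) H scale2K.
    rewrite !hM //; congr M.
    by rewrite -(addrK nu' mu) H2 addrAC addrK.
  - move=> mu nu mu' nu' K1 K2 K3 K4.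
    have Km1 : K (2^-1 *: (mu + mu')) by rewrite half_mid; apply: cK => //; lra.
    have Km2 : K (2^-1 *: (nu + nu')) by rewrite half_mid; apply: cK => //; lra.
    rewrite !hM //.
    set m := _ - _.
    have Em : (mu - nu) + (mu' - nu') = 2 *: m.
      by rewrite /m -scalerBr scale2K opprD addrACA.
    have := tr _ _ (V0_diff K1 K2) (V0_diff K3 K4).
    rewrite Em sc; last by exists 1, (2^-1 *: (mu + mu')), (2^-1 *: (nu + nu')); rewrite scale1r.
    rewrite ger0_norm //; lra.
move=> [rc mb mc].
exists (Mdef K rho); split; first exact: Mnorm.
move=> mu nu Km Kn.
by rewrite (Mrep cK mK rc mb (mu - nu) 1 mu nu Km Kn (esym (scale1r _))) normr1 mul1r.
Qed.
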